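(* Let $g\ge2$, let $q_i(x,y)=a_ix^2+2b_ixy+c_iy^2$ ($i=1,\ldots,g$) be integer binary quadratic forms, irreducible over the integers, with $a_i\equiv1\pmod4$, and with $D:=\prod_{p\le2g}p\prod_k a_kc_k\delta_k\prod_{i<j}\operatorname{Res}(q_i,q_j)\neq0$. Let $p$ be prime, $e_1,\ldots,e_g\ge0$ integers, and $\sigma\in S_g$ with $e_{\sigma(1)}\le\cdots\le e_{\sigma(g)}$. Then $$\rho(p^{e_1},\ldots,p^{e_g})\ll(e_{\sigma(g)}-e_{\sigma(g-1)}+1)\,p^{2e_{\sigma(1)}+\cdots+2e_{\sigma(g-1)}+e_{\sigma(g)}}.$$ Also $$\rho(p,\ldots,p)=\rho^*(p,\ldots,p)+p^{2(g-1)}=p^{2(g-1)}+O(p),$$ and for all but finitely many primes $p$, for each $n=1,\ldots,g$ one has $\rho(p^{\alpha_1},\ldots,p^{\alpha_g})\le2p$ where $\alpha_i=1$ if $i=n$ and $\alpha_i=0$ otherwise. Implied constants depend only on the forms.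
   Context: $\delta_k$ is the discriminant of $q_k$, $\operatorname{Res}$ the resultant. For positive integers $d_1,\ldots,d_g$: $\Lambda_{\mathbf d}:=\{\mathbf x\in\mathbb Z^2:d_i\mid q_i(\mathbf x)\ \forall i\}$, $\rho(\mathbf d):=\#(\Lambda_{\mathbf d}\cap[0,d_1\cdots d_g)^2)$, $\Lambda^*_{\mathbf d}:=\{\mathbf x\in\Lambda_{\mathbf d}:\gcd(x_1,x_2,d_1\cdots d_g)=1\}$, $\rho^*(\mathbf d):=\#(\Lambda^*_{\mathbf d}\cap[0,d_1\cdots d_g)^2)$. *)

(* Defs.v *)
From HB Require Import structures.
From mathcomp Require Import all_boot all_order all_algebra all_fingroup.
Set Implicit Arguments. Unset Strict Implicit. Unset Printing Implicit Defensive.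
Import Order.TTheory GRing.Theory Num.Theory.
Local Open Scope ring_scope.

Definition qform (g : nat) (a b c : 'I_g -> int) (i : 'I_g) (x y : int) : int :=
  a i * x ^+ 2 + 2 * b i * x * y + c i * y ^+ 2.

Definition irreducible_form (A B C : int) : Prop :=
  ~ exists r s t u : int, forall x y : int,
      A * x ^+ 2 + B * x * y + C * y ^+ 2 = (r * x + s * y) * (t * x + u * y).

Definition disc (a b c : int) : int := (2 * b) ^+ 2 - 4 * a * c.

(* resultant of A1 x^2 + B1 x y + C1 y^2 and A2 x^2 + B2 x y + C2 y^2
   (the 4x4 Sylvester determinant, written out) *)
Definition resQ (A1 B1 C1 A2 B2 C2 : int) : int :=
  (A1 * C2 - A2 * C1) ^+ 2 - (A1 * B2 - A2 * B1) * (B1 * C2 - B2 * C1).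

Definition res_forms (g : nat) (a b c : 'I_g -> int) (i j : 'I_g) : int :=
  resQ (a i) (2 * b i) (c i) (a j) (2 * b j) (c j).

Definition Dconst (g : nat) (a b c : 'I_g -> int) : int :=
  (\prod_(p < (2 * g).+1 | prime p) p)%N%:Z
  * (\prod_(k < g) (a k * c k * disc (a k) (b k) (c k)))
  * (\prod_(i < g) \prod_(j < g | (i < j)%N) res_forms a b c i j).

Definition rho (g : nat) (a b c : 'I_g -> int) (d : 'I_g -> nat) : nat :=
  #|[set x : 'I_(\prod_(i < g) d i) * 'I_(\prod_(i < g) d i) |
      [forall i : 'I_g, ((d i)%:Z %| qform a b c i (x.1 : nat)%:Z (x.2 : nat)%:Z)%Z]]|.

Definition rho_star (g : nat) (a b c : 'I_g -> int) (d : 'I_g -> nat) : nat :=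
  #|[set x : 'I_(\prod_(i < g) d i) * 'I_(\prod_(i < g) d i) |
      [forall i : 'I_g, ((d i)%:Z %| qform a b c i (x.1 : nat)%:Z (x.2 : nat)%:Z)%Z]
      && (gcdn (gcdn x.1 x.2) (\prod_(i < g) d i) == 1)%N]|.

(* Main.v *)
Require Import Defs.
From HB Require Import structures.
From mathcomp Require Import all_boot all_order all_algebra all_fingroup.
From mathcomp Require Import zify ring lra.
Set Implicit Arguments. Unset Strict Implicit. Unset Printing Implicit Defensive.
Import Order.TTheory GRing.Theory Num.Theory.

Definition cnt (n : nat) (P : pred nat) : nat := count P (iota 0 n).
Definition pairs (n : nat) := [seq (x, y) | x <- iota 0 n, y <- iota 0 n].
Definition cnt2 (n : nat) (P : nat -> nat -> bool) : nat :=
  count (fun z => P z.1 z.2) (pairs n).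

Lemma count_sum T (a : pred T) s : count a s = \sum_(i <- s) (a i : nat).
Proof. by elim: s => [|x s IH]; rewrite ?big_nil ?big_cons //= IH. Qed.

Lemma cnt2E n P : cnt2 n P = \sum_(x <- iota 0 n) cnt n (P x).
Proof.
rewrite /cnt2 /pairs count_sum big_allpairs; apply: eq_bigr => x _.
by rewrite /cnt count_sum.
Qed.

Lemma cnt_le n P : cnt n P <= n.
Proof. by rewrite /cnt (leq_trans (count_size _ _)) // size_iota. Qed.

Lemma cnt2_le n P : cnt2 n P <= n * n.
Proof.
rewrite cnt2E -[X in _ <= X * _](size_iota 0 n) -sum1_size big_distrl /=.
by apply: leq_sum => x _; rewrite mul1n cnt_le.
Qed.

Lemma cnt_sub n (P Q : pred nat) : (forall x, x < n -> P x -> Q x) -> cnt n P <= cnt n Q.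
Proof.
move=> H; rewrite /cnt !count_sum big_seq_cond [X in _ <= X]big_seq_cond.
apply: leq_sum => x; rewrite mem_iota add0n andbT => /H; case: (P x) => //= ->; by [].
Qed.

Lemma cnt2_sub n (P Q : nat -> nat -> bool) :
  (forall x y, x < n -> y < n -> P x y -> Q x y) -> cnt2 n P <= cnt2 n Q.
Proof.
move=> H; rewrite !cnt2E big_seq [X in _ <= X]big_seq.
apply: leq_sum => x; rewrite mem_iota add0n => /= hx.
by apply: cnt_sub => y hy; apply: H.
Qed.

Lemma cnt_or n (P Q : pred nat) : cnt n (fun x => P x || Q x) <= cnt n P + cnt n Q.
Proof. by rewrite /cnt -count_predUI leq_addr. Qed.

Lemma cnt2_or n (P Q : nat -> nat -> bool) :
  cnt2 n (fun x y => P x y || Q x y) <= cnt2 n P + cnt2 n Q.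
Proof. by rewrite /cnt2 -count_predUI leq_addr. Qed.

Lemma cnt_per M k (P : pred nat) : (forall x, P x = P (x %% M)) ->
  cnt (M * k) P = k * cnt M P.
Proof.
move=> HP; elim: k => [|k IH]; first by rewrite muln0.
rewrite mulnSr /cnt iotaD count_cat.
have -> : iota (0 + M * k) M = map (addn (M * k)) (iota 0 M) by rewrite add0n -iotaDl addn0.
rewrite count_map -/(cnt _ _) IH.
rewrite mulSn addnC; congr (_ + _).
apply: eq_count => x /=; rewrite HP [in RHS]HP; congr P.
by rewrite addnC -modnDmr modnMr addn0.
Qed.

Lemma sum_per M k (f : nat -> nat) : (forall x, f x = f (x %% M)) ->
  \sum_(x <- iota 0 (M * k)) f x = k * \sum_(x <- iota 0 M) f x.
Proof.
move=> HP; elim: k => [|k IH]; first by rewrite muln0 big_nil.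
rewrite mulnSr iotaD big_cat.
have -> : iota (0 + M * k) M = map (addn (M * k)) (iota 0 M) by rewrite add0n -iotaDl addn0.
rewrite big_map IH.
rewrite mulSn addnC; congr (_ + _).
apply: eq_bigr => x _; rewrite HP [in RHS]HP; congr f.
by rewrite addnC -modnDmr modnMr addn0.
Qed.

Lemma cnt2_per M k (P : nat -> nat -> bool) :
  (forall x y, P x y = P (x %% M) (y %% M)) ->
  cnt2 (M * k) P = k ^ 2 * cnt2 M P.
Proof.
move=> HP; rewrite !cnt2E.
rewrite (eq_bigr (fun x => k * cnt M (P x))); last first.
  move=> x _; apply: cnt_per => y; by rewrite HP [in RHS]HP modn_mod.
rewrite -big_distrr /= sum_per; last first.
  move=> x; apply: eq_count => y /=; by rewrite HP [in RHS]HP modn_mod.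
by rewrite mulnA mulnn.
Qed.

Lemma cnt_inj n m (P Q : pred nat) (h : nat -> nat) :
  (forall x, x < n -> P x -> h x < m /\ Q (h x)) ->
  (forall x y, x < n -> y < n -> P x -> P y -> h x = h y -> x = y) ->
  cnt n P <= cnt m Q.
Proof.
move=> H1 H2; rewrite /cnt -!size_filter.
rewrite -(size_map h); apply: uniq_leq_size.
  rewrite map_inj_in_uniq ?filter_uniq ?iota_uniq //.
  move=> x y; rewrite !mem_filter !mem_iota !add0n /= => /andP[Px xn] /andP[Py yn].
  exact: H2.
move=> z /mapP [x]; rewrite mem_filter mem_iota add0n => /andP[Px xn] ->.
have [hm Qh] := H1 x xn Px.
by rewrite mem_filter mem_iota add0n Qh hm.
Qed.

Lemma mem_pairs n z : (z \in pairs n) = (z.1 < n) && (z.2 < n).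
Proof.
case: z => x y /=; apply/allpairsP/andP => [[[x' y'] /= [] ]|[hx hy]].
  by rewrite !mem_iota !add0n => h1 h2 [-> ->].
by exists (x, y); rewrite /= !mem_iota !add0n.
Qed.

Lemma pairs_uniq n : uniq (pairs n).
Proof.
apply: allpairs_uniq; rewrite ?iota_uniq //.
by move=> [a b] [c d] _ _ /=.
Qed.

Lemma cnt2_inj n m (P Q : nat -> nat -> bool) (h : nat * nat -> nat * nat) :
  (forall x y, x < n -> y < n -> P x y ->
     [/\ (h (x, y)).1 < m, (h (x, y)).2 < m & Q (h (x, y)).1 (h (x, y)).2]) ->
  (forall z w, z.1 < n -> z.2 < n -> w.1 < n -> w.2 < n -> P z.1 z.2 -> P w.1 w.2 ->
     h z = h w -> z = w) ->
  cnt2 n P <= cnt2 m Q.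
Proof.
move=> H1 H2; rewrite /cnt2 -!size_filter.
rewrite -(size_map h); apply: uniq_leq_size.
  rewrite map_inj_in_uniq ?filter_uniq ?pairs_uniq //.
  move=> z w; rewrite !mem_filter !mem_pairs /= => /andP[Pz /andP[z1 z2]] /andP[Pw /andP[w1 w2]].
  exact: H2.
move=> z /mapP [[x y]]; rewrite mem_filter mem_pairs /= => /andP[Px /andP[xn yn]] ->.
have [h1 h2 Qh] := H1 x y xn yn Px.
by rewrite mem_filter mem_pairs Qh h1 h2.
Qed.

Lemma cnt_pos n (P : pred nat) x : x < n -> P x -> 0 < cnt n P.
Proof.
move=> xn Px; rewrite /cnt -has_count; apply/hasP; exists x => //.
by rewrite mem_iota add0n.
Qed.

Lemma cnt_le1 n (P : pred nat) :
  (forall x y, x < n -> y < n -> P x -> P y -> x = y) -> cnt n P <= 1.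
Proof.
move=> H; have -> : 1 = cnt 1 predT by [].
by apply: (cnt_inj (h := fun _ => 0)) => // x y xn yn Px Py _; apply: H.
Qed.

Lemma natz_dvd_mod (M x y : nat) : (M%:Z %| (x%:Z - y%:Z)%R)%Z -> x %% M = y %% M.
Proof.
rewrite -eqz_mod_dvd !modz_nat => /eqP; by case.
Qed.

Lemma cnt_class M k (P : pred nat) : 0 < M ->
  (forall x y, x < M * k -> y < M * k -> P x -> P y -> (M%:Z %| (x%:Z - y%:Z)%R)%Z) ->
  cnt (M * k) P <= k.
Proof.
move=> M0 H.
case: (boolP (has P (iota 0 (M * k)))) => [/hasP [x0]|]; last first.
  by rewrite has_count -leqNgt /cnt leqn0 => /eqP ->.
rewrite mem_iota add0n => x0n Px0.
apply: (@leq_trans (cnt (M * k) (fun x => x %% M == x0 %% M))).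
  apply: cnt_sub => x xn Px; apply/eqP; apply: natz_dvd_mod; exact: H.
rewrite cnt_per; last by move=> x; rewrite modn_mod.
rewrite -[X in _ <= X]muln1 leq_mul2l; apply/orP; right.
apply: cnt_le1 => x y xM yM /eqP hx /eqP hy.
by move: hx hy; rewrite (modn_small xM) (modn_small yM) => -> ->.
Qed.

Local Open Scope ring_scope.

Definition dz (d : nat) (X : int) : bool := (d%:Z %| X)%Z.

Lemma dzE d X : dz d X = (d %| `|X|)%N.
Proof. by rewrite /dz dvdzE. Qed.
Lemma dzD d X Y : dz d X -> dz d Y -> dz d (X + Y).
Proof. by rewrite /dz; apply: rpredD. Qed.
Lemma dzB d X Y : dz d X -> dz d Y -> dz d (X - Y).
Proof. by rewrite /dz; apply: rpredB. Qed.
Lemma dzN d X : dz d (- X) = dz d X.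
Proof. by rewrite /dz rpredN. Qed.
Lemma dz0 d : dz d 0.
Proof. by rewrite /dz dvdz0. Qed.
Lemma dzMl d X Y : dz d Y -> dz d (X * Y).
Proof. by rewrite /dz; apply: dvdz_mull. Qed.
Lemma dzMr d X Y : dz d X -> dz d (X * Y).
Proof. by rewrite /dz; apply: dvdz_mulr. Qed.
Lemma dz_nat d (n : nat) : dz d n%:Z = (d %| n)%N.
Proof. by rewrite dzE absz_nat. Qed.
Lemma dz_trans d e X : (d %| e)%N -> dz e X -> dz d X.
Proof. rewrite !dzE => h1 h2; exact: dvdn_trans h1 h2. Qed.
Lemma dz_pow (p a b : nat) X : (a <= b)%N -> dz (p ^ b) X -> dz (p ^ a) X.
Proof. by move=> ab; apply: dz_trans; apply: dvdn_exp2l. Qed.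
Lemma dzMM d e X Y : dz d X -> dz e Y -> dz (d * e) (X * Y).
Proof. rewrite !dzE abszM => h1 h2; exact: dvdn_mul. Qed.
Lemma dz1 X : dz 1 X.
Proof. by rewrite dzE dvd1n. Qed.
Lemma PoszX (n k : nat) : ((n ^ k)%N)%:Z = n%:Z ^+ k.
Proof. by rewrite -!natz natrX. Qed.

Lemma dvd_split (p F m : nat) (X Y : int) : prime p -> X != 0 ->
  ~~ (p ^ m.+1 %| `|X|)%N -> dz (p ^ F) (X * Y) -> dz (p ^ (F - m)) Y.
Proof.
move=> pp X0 nd; rewrite !dzE abszM.
have [->|Y0] := eqVneq Y 0; first by rewrite dvdn0.
have X0' : (0 < `|X|)%N by rewrite absz_gt0.
have Y0' : (0 < `|Y|)%N by rewrite absz_gt0.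
rewrite !pfactor_dvdn // ?muln_gt0 ?X0' ?Y0' // lognM //.
move: nd; rewrite pfactor_dvdn // -ltnNge => h1 h2.
rewrite leq_subLR (leq_trans h2) // leq_add2r -ltnS //.
Qed.

Lemma sq_count (p F : nat) (D : int) : prime p -> D != 0 ->
  (cnt (p ^ F) (fun u => dz (p ^ F) (u%:Z ^+ 2 - D)) <= 4 * `|D|)%N.
Proof.
move=> pp D0.
have p1 : (1 < p)%N by apply: prime_gt1.
have p0 : (0 < p)%N by apply: prime_gt0.
have D0' : (0 < `|D|)%N by rewrite absz_gt0.
set d := logn p `|D|.
have pdD : (p ^ d <= `|D|)%N by apply: dvdn_leq => //; apply: pfactor_dvdnn.
have [hF|hF] := leqP F d.
  apply: (leq_trans (cnt_le _ _)); apply: (leq_trans (leq_pexp2l p0 hF)).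
  by apply: (leq_trans pdD); rewrite leq_pmull.
case: (boolP (has (fun u => dz (p ^ F) (u%:Z ^+ 2 - D)) (iota 0 (p ^ F)))) => [/hasP [u1]|]; last first.
  by rewrite has_count -leqNgt /cnt leqn0 => /eqP ->.
rewrite mem_iota add0n => u1n Hu1.
have dD : dz (p ^ d) D by rewrite dzE pfactor_dvdnn.
have ndD : ~~ dz (p ^ d.+1) D by rewrite dzE pfactor_dvdn // ltnn.
have c1 : dz (p ^ d) (u1%:Z ^+ 2).
  have -> : u1%:Z ^+ 2 = (u1%:Z ^+ 2 - D) + D by ring.
  by rewrite dzD // (dz_pow (ltnW hF) Hu1).
have c2 : ~~ dz (p ^ d.+1) (u1%:Z ^+ 2).
  apply: contra ndD => h.
  have -> : D = u1%:Z ^+ 2 - (u1%:Z ^+ 2 - D) by ring.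
  by rewrite dzB // (dz_pow hF Hu1).
have u10 : (0 < u1)%N.
  by case: u1 {u1n Hu1 c1} c2 => //; rewrite expr2 mulr0 dz0.
have u1sq : logn p (u1 ^ 2) = d.
  move: c1 c2; rewrite -PoszX !dz_nat !pfactor_dvdn ?expn_gt0 ?u10 //.
  move=> h1 h2; apply/eqP; rewrite eqn_leq h1 andbT leqNgt; exact: h2.
set m := logn p (2 * u1).
have pm : (p ^ m <= 2 * `|D|)%N.
  rewrite /m lognM // expnD leq_mul //.
    by apply: dvdn_leq => //; apply: pfactor_dvdnn.
  apply: (leq_trans _ pdD); rewrite -u1sq lognX leq_pexp2l //.
  by rewrite leq_pmull.
have key : forall u : nat, dz (p ^ F) (u%:Z ^+ 2 - D) ->
   dz (p ^ (F - m)) (u%:Z - u1%:Z) || dz (p ^ (F - m)) (u%:Z + u1%:Z).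
  move=> u Hu.
  have Hprod : dz (p ^ F) ((u%:Z - u1%:Z) * (u%:Z + u1%:Z)).
    have -> : (u%:Z - u1%:Z) * (u%:Z + u1%:Z) = (u%:Z ^+ 2 - D) - (u1%:Z ^+ 2 - D) by ring.
    by rewrite dzB.
  have n2u1 : ~~ dz (p ^ m.+1) (2 * u1)%N%:Z.
    by rewrite dz_nat pfactor_dvdn ?muln_gt0 ?u10 // ltnn.
  case: (boolP (dz (p ^ m.+1) (u%:Z - u1%:Z))) => h.
    apply/orP; left.
    have X0 : u%:Z + u1%:Z != 0.
      rewrite -PoszD; apply/eqP => -[] /eqP; rewrite addn_eq0 => /andP[_ /eqP hh]; by move: u10; rewrite hh.
    apply: (dvd_split (X := u%:Z + u1%:Z) (Y := u%:Z - u1%:Z)) => //; last by rewrite mulrC.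
    rewrite -dzE; apply: contra n2u1 => h2.
    have -> : (2 * u1)%N%:Z = (u%:Z + u1%:Z) - (u%:Z - u1%:Z) by rewrite PoszM; ring.
    by apply: dzB.
  apply/orP; right.
  have [e0|X0] := eqVneq (u%:Z - u1%:Z) 0; first by move: h; rewrite e0 dz0.
  by apply: (dvd_split (X := u%:Z - u1%:Z) (Y := u%:Z + u1%:Z)) => //; rewrite -dzE.
have [hm|hm] := leqP F m.
  apply: (leq_trans (cnt_le _ _)); apply: (leq_trans (leq_pexp2l p0 hm)).
  by apply: (leq_trans pm); rewrite leq_mul2r /= orbT.
apply: (@leq_trans (cnt (p ^ F) (fun u => dz (p ^ (F - m)) (u%:Z - u1%:Z)
                                  || dz (p ^ (F - m)) (u%:Z + u1%:Z)))).
  by apply: cnt_sub => u _; apply: key.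
apply: (leq_trans (cnt_or _ _ _)).
have eF : (p ^ F = p ^ (F - m) * p ^ m)%N by rewrite -expnD subnK // ltnW.
have b1 : forall s : int, (cnt (p ^ F) (fun u => dz (p ^ (F - m)) (u%:Z + s)) <= p ^ m)%N.
  move=> s; rewrite eF; apply: cnt_class; first by rewrite expn_gt0 p0.
  move=> x y _ _ hx hy.
  have -> : x%:Z - y%:Z = (x%:Z + s) - (y%:Z + s) by ring.
  by rewrite -/(dz _ _) dzB.
have -> : (4 * `|D| = 2 * (2 * `|D|))%N by rewrite mulnA.
rewrite mul2n -addnn; apply: leq_add; apply: (leq_trans _ pm).
  exact: (b1 (- u1%:Z)).
exact: b1.
Qed.

Lemma mod_rep (M : nat) (W : int) : (0 < M)%N -> exists2 u : nat, (u < M)%N & dz M (W - u%:Z).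
Proof.
move=> M0.
have M0' : M%:Z != 0 by rewrite eqz_nat -lt0n.
exists `|(W %% M%:Z)%Z|%N.
  by rewrite -ltz_nat gez0_abs ?modz_ge0 // ltz_pmod // ltz_nat.
rewrite gez0_abs ?modz_ge0 //.
rewrite {1}(divz_eq W M%:Z) addrK /dz.
by apply: dvdz_mull; apply: dvdzz.
Qed.

Lemma cnt_fiber n m (P : pred nat) (G : nat -> nat -> bool) (b : nat) (S : pred nat) :
  (forall t, (t < n)%N -> P t -> exists2 u, (u < m)%N & G t u) ->
  (forall u, (u < m)%N -> (cnt n (fun t => G t u) <= b)%N) ->
  (forall t u, G t u -> S u) ->
  (cnt n P <= b * cnt m S)%N.
Proof.
move=> H1 H2 H3.
apply: (@leq_trans (\sum_(t <- iota 0 n) cnt m (fun u => S u && G t u))).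
  rewrite /cnt count_sum big_seq [X in (_ <= X)%N]big_seq; apply: leq_sum => t.
  rewrite mem_iota add0n => /= tn.
  case: (boolP (P t)) => //= Pt.
  have [u um Gu] := H1 t tn Pt.
  by apply: (cnt_pos um); rewrite Gu (H3 _ _ Gu).
rewrite /cnt (eq_bigr (fun t => \sum_(u <- iota 0 m) ((S u && G t u) : nat))); last first.
  by move=> t _; rewrite count_sum.
rewrite exchange_big /= count_sum big_distrr /= big_seq [X in (_ <= X)%N]big_seq.
apply: leq_sum => u; rewrite mem_iota add0n => /= um.
case: (boolP (S u)) => Su /=.
  by rewrite muln1 -count_sum; apply: H2.
by rewrite muln0 big1.
Qed.

Lemma root_count (p F : nat) (A B C : int) : prime p -> A != 0 -> B ^+ 2 - 4 * A * C != 0 ->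
  (cnt (p ^ F) (fun t => dz (p ^ F) (A * t%:Z ^+ 2 + B * t%:Z + C))
     <= 8 * absz A * absz (B ^+ 2 - 4 * A * C)%R)%N.
Proof.
move=> pp A0 D0.
set D := B ^+ 2 - 4 * A * C.
have p0 : (0 < p)%N by apply: prime_gt0.
have pF0 : (0 < p ^ F)%N by rewrite expn_gt0 p0.
have A20 : (0 < `|(2 * A)%R|)%N by rewrite absz_gt0 mulf_neq0.
set al := minn (logn p `|(2 * A)%R|) F.
have alF : (al <= F)%N by rewrite geq_minr.
have pal : (p ^ al <= 2 * `|A|)%N.
  apply: (@leq_trans (p ^ logn p `|(2 * A)%R|)); first by rewrite leq_pexp2l // geq_minl.
  have -> : (2 * `|A| = `|(2 * A)%R|)%N by rewrite abszM.
  by apply: dvdn_leq => //; apply: pfactor_dvdnn.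
apply: (@leq_trans (p ^ al * cnt (p ^ F) (fun u => dz (p ^ F) (u%:Z ^+ 2 - D)))).
  apply: (cnt_fiber (G := fun t u => dz (p ^ F) (u%:Z ^+ 2 - D) &&
                                      dz (p ^ F) (2 * A * t%:Z + B - u%:Z))).
  - move=> t _ Ht.
    have [u um Hu] := mod_rep (2 * A * t%:Z + B) pF0.
    exists u => //; rewrite Hu andbT.
    have -> : u%:Z ^+ 2 - D = 4 * A * (A * t%:Z ^+ 2 + B * t%:Z + C)
              - (2 * A * t%:Z + B - u%:Z) * (2 * A * t%:Z + B + u%:Z).
      by rewrite /D; ring.
    by apply: dzB; [apply: dzMl | apply: dzMr].
  - move=> u _.
    have eF : (p ^ F = p ^ (F - al) * p ^ al)%N by rewrite -expnD subnK.
    rewrite {1}eF.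
    apply: (@leq_trans (cnt (p ^ (F - al) * p ^ al) (fun t => dz (p ^ F) (2 * A * t%:Z + B - u%:Z)))).
      by apply: cnt_sub => t _ /andP[].
    apply: cnt_class; first by rewrite expn_gt0 p0.
    move=> x y _ _ hx hy.
    have hxy : dz (p ^ F) ((2 * A) * (x%:Z - y%:Z)).
      have -> : (2 * A) * (x%:Z - y%:Z) = (2 * A * x%:Z + B - u%:Z) - (2 * A * y%:Z + B - u%:Z) by ring.
      by apply: dzB.
    rewrite -/(dz _ _).
    have [hl|hl] := leqP F (logn p `|(2 * A)%R|).
      by rewrite /al (minn_idPr hl) subnn expn0 dz1.
    rewrite /al (minn_idPl (ltnW hl)).
    apply: (dvd_split (X := 2 * A)) => //; first by rewrite mulf_neq0.
    by rewrite pfactor_dvdn // ltnn.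
  - by move=> t u /andP[].
apply: (leq_trans (leq_mul pal (sq_count F pp D0))).
rewrite -/D; set x := `|A|; set y := `|D|; lia.
Qed.

Definition Qf (A B C x y : int) : int := A * x ^+ 2 + B * x * y + C * y ^+ 2.

Lemma dz_diff M U V : dz M (U - V) -> dz M U = dz M V.
Proof.
move=> h; apply/idP/idP => h2.
  have -> : V = U - (U - V) by ring.
  by apply: dzB.
have -> : U = (U - V) + V by ring.
by apply: dzD.
Qed.

Lemma Qf_per (A B C : int) (M : nat) x y :
  dz M (Qf A B C x%:Z y%:Z) = dz M (Qf A B C (x %% M)%N%:Z (y %% M)%N%:Z).
Proof.
apply: dz_diff.
rewrite {1}(divn_eq x M) {1}(divn_eq y M) !PoszD !PoszM.
set X := (x %% M)%N%:Z; set Y := (y %% M)%N%:Z; set k := (x %/ M)%N%:Z; set l := (y %/ M)%N%:Z.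
have -> : Qf A B C (k * M%:Z + X) (l * M%:Z + Y) - Qf A B C X Y =
   M%:Z * (A * (k * k * M%:Z + 2 * k * X) + B * (k * l * M%:Z + k * Y + l * X)
           + C * (l * l * M%:Z + 2 * l * Y)) by rewrite /Qf; ring.
by apply: dzMr; rewrite /dz dvdzz.
Qed.

Lemma coprime_pow_nat (p F y : nat) : prime p -> ~~ (p %| y)%N -> coprime (p ^ F) y.
Proof. by move=> pp h; apply: coprimeXl; rewrite prime_coprime. Qed.

Lemma cnt2_swap n P : cnt2 n P = cnt2 n (fun x y => P y x).
Proof. by rewrite !cnt2E /cnt; under eq_bigr do rewrite count_sum; rewrite exchange_big /=;
  apply: eq_bigr => y _; rewrite count_sum. Qed.

Lemma fiber_y (p F y : nat) (A B C : int) : prime p -> ~~ (p %| y)%N ->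
  (cnt (p ^ F) (fun x => dz (p ^ F) (Qf A B C x%:Z y%:Z))
    <= cnt (p ^ F) (fun t => dz (p ^ F) (A * t%:Z ^+ 2 + B * t%:Z + C)))%N.
Proof.
move=> pp py.
have p0 : (0 < p)%N by apply: prime_gt0.
have pF0 : (0 < p ^ F)%N by rewrite expn_gt0 p0.
have cop := coprime_pow_nat F pp py.
rewrite -[X in (_ <= X)%N]mul1n.
apply: (cnt_fiber (G := fun x t => dz (p ^ F) (A * t%:Z ^+ 2 + B * t%:Z + C) &&
                                  dz (p ^ F) (x%:Z - t%:Z * y%:Z))).
- move=> x _ /= Hx.
  have [a _ ha] := Bezoutl y pF0.
  rewrite (eqP cop) in ha.
  have [t tn ht] := mod_rep (- (x%:Z * a%:Z)) pF0.
  have hxt : dz (p ^ F) (x%:Z - t%:Z * y%:Z).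
    have -> : x%:Z - t%:Z * y%:Z = x%:Z * (1 + a * y)%N%:Z + (- (x%:Z * a%:Z) - t%:Z) * y%:Z.
      by rewrite PoszD PoszM; ring.
    by apply: dzD; [apply: dzMl; rewrite dz_nat | apply: dzMr].
  exists t => //; rewrite hxt andbT.
  have h2 : dz (p ^ F) (y%:Z ^+ 2 * (A * t%:Z ^+ 2 + B * t%:Z + C)).
    have -> : y%:Z ^+ 2 * (A * t%:Z ^+ 2 + B * t%:Z + C) =
        Qf A B C x%:Z y%:Z - (x%:Z - t%:Z * y%:Z) * (A * (x%:Z + t%:Z * y%:Z) + B * y%:Z)
      by rewrite /Qf; ring.
    by apply: dzB => //; apply: dzMr.
  move: h2; rewrite !dzE abszM -PoszX absz_nat Gauss_dvdr //.
  by rewrite coprime_sym coprimeXl // coprime_sym.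
- move=> t _; rewrite -{1}[(p ^ F)%N]muln1; apply: cnt_class => //.
  move=> x x' _ _ /andP[_ h1] /andP[_ h2].
  rewrite -/(dz _ _).
  have -> : x%:Z - x'%:Z = (x%:Z - t%:Z * y%:Z) - (x'%:Z - t%:Z * y%:Z) by ring.
  by apply: dzB.
- by move=> x t /andP[].
Qed.

Lemma prim_y (p F : nat) (A B C : int) : prime p -> A != 0 -> B ^+ 2 - 4 * A * C != 0 ->
  (cnt2 (p ^ F) (fun x y => ~~ (p %| y)%N && dz (p ^ F) (Qf A B C x%:Z y%:Z))
     <= p ^ F * (8 * absz A * absz (B ^+ 2 - 4 * A * C)%R))%N.
Proof.
move=> pp A0 D0.
have p0 : (0 < p)%N by apply: prime_gt0.
have pF0 : (0 < p ^ F)%N by rewrite expn_gt0 p0.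
rewrite cnt2_swap cnt2E -[X in (_ <= X * _)%N](size_iota 0 (p ^ F)) -sum1_size big_distrl /=.
apply: leq_sum => y _; rewrite mul1n.
case: (boolP (p %| y)%N) => py.
  by rewrite /cnt (eq_count (a2 := pred0)) ?count_pred0 // => x /=; rewrite py.
have cop := coprime_pow_nat F pp py.
apply: (@leq_trans (1 * cnt (p ^ F) (fun t => dz (p ^ F) (A * t%:Z ^+ 2 + B * t%:Z + C)))); last first.
  by rewrite mul1n; apply: root_count.
apply: (cnt_fiber (G := fun x t => dz (p ^ F) (A * t%:Z ^+ 2 + B * t%:Z + C) &&
                                  dz (p ^ F) (x%:Z - t%:Z * y%:Z))).
- move=> x _ /= Hx.
  have [a _ ha] := Bezoutl y pF0.
  rewrite (eqP cop) in ha.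
  have [t tn ht] := mod_rep (- (x%:Z * a%:Z)) pF0.
  have hxt : dz (p ^ F) (x%:Z - t%:Z * y%:Z).
    have -> : x%:Z - t%:Z * y%:Z = x%:Z * (1 + a * y)%N%:Z + (- (x%:Z * a%:Z) - t%:Z) * y%:Z.
      by rewrite PoszD PoszM; ring.
    by apply: dzD; [apply: dzMl; rewrite dz_nat | apply: dzMr].
  exists t => //; rewrite hxt andbT.
  have h2 : dz (p ^ F) (y%:Z ^+ 2 * (A * t%:Z ^+ 2 + B * t%:Z + C)).
    have -> : y%:Z ^+ 2 * (A * t%:Z ^+ 2 + B * t%:Z + C) =
        Qf A B C x%:Z y%:Z - (x%:Z - t%:Z * y%:Z) * (A * (x%:Z + t%:Z * y%:Z) + B * y%:Z)
      by rewrite /Qf; ring.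
    by apply: dzB => //; apply: dzMr.
  move: h2; rewrite !dzE abszM -PoszX absz_nat Gauss_dvdr //.
  by rewrite coprime_sym coprimeXl // coprime_sym.
- move=> t _; rewrite -{1}[(p ^ F)%N]muln1; apply: cnt_class => //.
  move=> x x' _ _ /andP[_ h1] /andP[_ h2].
  rewrite -/(dz _ _).
  have -> : x%:Z - x'%:Z = (x%:Z - t%:Z * y%:Z) - (x'%:Z - t%:Z * y%:Z) by ring.
  by apply: dzB.
- by move=> x t /andP[].
Qed.


Lemma nonprim (p F : nat) (A B C : int) : prime p -> (2 <= F)%N ->
  (cnt2 (p ^ F) (fun x y => (p %| x)%N && (p %| y)%N && dz (p ^ F) (Qf A B C x%:Z y%:Z))
   <= p ^ 2 * cnt2 (p ^ (F - 2)) (fun x y => dz (p ^ (F - 2)) (Qf A B C x%:Z y%:Z)))%N.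
Proof.
move=> pp F2.
have p0 : (0 < p)%N by apply: prime_gt0.
have eF1 : (p ^ (F - 1) = p ^ (F - 2) * p)%N.
  by rewrite -expnSr; congr expn; lia.
have eF : (p ^ F = p ^ (F - 1) * p)%N.
  by rewrite -expnSr; congr expn; lia.
have eF2 : (p ^ F = p ^ 2 * p ^ (F - 2))%N.
  by rewrite -expnD; congr expn; lia.
apply: (@leq_trans (cnt2 (p ^ (F - 1)) (fun x y => dz (p ^ (F - 2)) (Qf A B C x%:Z y%:Z)))).
  apply: (cnt2_inj (h := fun z => (z.1 %/ p, z.2 %/ p))%N).
  - move=> x y xn yn /andP[/andP[px py] hq] /=.
    rewrite !ltn_divLR // -eF xn yn; split => //.
    move: hq; rewrite -{1}(divnK px) -{1}(divnK py) !PoszM.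
    have -> : Qf A B C ((x %/ p)%N%:Z * p%:Z) ((y %/ p)%N%:Z * p%:Z) =
              (p ^ 2)%N%:Z * Qf A B C (x %/ p)%N%:Z (y %/ p)%N%:Z.
      by rewrite PoszX /Qf; ring.
    rewrite !dzE abszM absz_nat eF2 dvdn_pmul2l //.
    by rewrite expn_gt0 p0.
  - move=> [x y] [x' y'] /= _ _ _ _ /andP[/andP[px py] _] /andP[/andP[px' py'] _] [e1 e2].
    by rewrite -(divnK px) -(divnK px') e1 -(divnK py) -(divnK py') e2.
rewrite eF1 cnt2_per //.
by move=> x y; rewrite Qf_per.
Qed.

Lemma small_zero (p x : nat) : (x < p)%N -> (p %| x)%N -> x = 0%N.
Proof.
by move=> xp; rewrite /dvdn modn_small // => /eqP.
Qed.

Definition KR (A B C : int) : nat := (8 * absz A * absz C * absz (B ^+ 2 - 4 * A * C)%R)%N.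

Lemma N_bound (p : nat) (A B C : int) : prime p -> A != 0 -> C != 0 -> B ^+ 2 - 4 * A * C != 0 ->
  forall F, (cnt2 (p ^ F) (fun x y => dz (p ^ F) (Qf A B C x%:Z y%:Z))
             <= (2 * KR A B C + 1) * F.+1 * p ^ F)%N.
Proof.
move=> pp A0 C0 D0.
have p0 : (0 < p)%N by apply: prime_gt0.
have Ap : (0 < absz A)%N by rewrite absz_gt0.
have Cp : (0 < absz C)%N by rewrite absz_gt0.
set K := KR A B C.
have HPy : forall F, (cnt2 (p ^ F) (fun x y => ~~ (p %| y)%N && dz (p ^ F) (Qf A B C x%:Z y%:Z))
                     <= p ^ F * K)%N.
  move=> F; apply: (leq_trans (prim_y F pp A0 D0)); rewrite leq_mul2l; apply/orP; right.
  rewrite /K /KR; move: Cp; set a := absz A; set c := absz C;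
  set d := absz (B ^+ 2 - 4 * A * C)%R; nia.
have HPx : forall F, (cnt2 (p ^ F) (fun x y => ~~ (p %| x)%N && dz (p ^ F) (Qf A B C x%:Z y%:Z))
                     <= p ^ F * K)%N.
  move=> F; rewrite cnt2_swap.
  have eD : B ^+ 2 - 4 * C * A = B ^+ 2 - 4 * A * C by ring.
  have D0' : B ^+ 2 - 4 * C * A != 0 by rewrite eD.
  apply: (@leq_trans (cnt2 (p ^ F) (fun x y => ~~ (p %| y)%N && dz (p ^ F) (Qf C B A x%:Z y%:Z)))).
    apply: cnt2_sub => x y _ _ /andP[h1 h2]; rewrite h1 /=.
    by have <- : Qf A B C y%:Z x%:Z = Qf C B A x%:Z y%:Z by rewrite /Qf; ring.
  apply: (leq_trans (prim_y F pp C0 D0')); rewrite leq_mul2l eD; apply/orP; right.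
  rewrite /K /KR; move: Ap; set a := absz A; set c := absz C;
  set d := absz (B ^+ 2 - 4 * A * C)%R; nia.
elim/ltn_ind => F IH.
have split3 : (cnt2 (p ^ F) (fun x y => dz (p ^ F) (Qf A B C x%:Z y%:Z)) <=
   cnt2 (p ^ F) (fun x y => ~~ (p %| y)%N && dz (p ^ F) (Qf A B C x%:Z y%:Z)) +
   cnt2 (p ^ F) (fun x y => ~~ (p %| x)%N && dz (p ^ F) (Qf A B C x%:Z y%:Z)) +
   cnt2 (p ^ F) (fun x y => (p %| x)%N && (p %| y)%N && dz (p ^ F) (Qf A B C x%:Z y%:Z)))%N.
  apply: (leq_trans _ (leq_add (cnt2_or _ _ _) (leqnn _))).
  apply: (leq_trans _ (cnt2_or _ _ _)).
  apply: cnt2_sub => x y _ _ h; rewrite h.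
  by case: (p %| x)%N; case: (p %| y)%N.
apply: (leq_trans split3).
case: F IH split3 => [|[|F]] IH _.
- apply: (leq_trans (leq_add (leq_add (HPy 0%N) (HPx 0%N)) (cnt2_le _ _))).
  rewrite expn0; set k := K; lia.
- have np : (cnt2 (p ^ 1) (fun x y => (p %| x)%N && (p %| y)%N && dz (p ^ 1) (Qf A B C x%:Z y%:Z)) <= 1)%N.
    have -> : 1%N = cnt2 1 (fun _ _ => true) by [].
    apply: (cnt2_inj (h := fun _ => (0, 0)%N)) => //.
    move=> [x y] [x' y'] /=; rewrite expn1 => h1 h2 h3 h4 /andP[/andP[d1 d2] _] /andP[/andP[d3 d4] _] _.
    by rewrite (small_zero h1 d1) (small_zero h2 d2) (small_zero h3 d3) (small_zero h4 d4).
  apply: (leq_trans (leq_add (leq_add (HPy 1%N) (HPx 1%N)) np)).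
  rewrite expn1; move: p0; set k := K; nia.
- have np := @nonprim p F.+2 A B C pp (isT : (2 <= F.+2)%N).
  have IHF := IH F (leqnSn _).
  have e2 : (F.+2 - 2 = F)%N by rewrite subn2.
  rewrite e2 in np.
  apply: (leq_trans (leq_add (leq_add (HPy F.+2) (HPx F.+2)) (leq_trans np (leq_mul (leqnn _) IHF)))).
  have -> : (p ^ F.+2 = p ^ F * p ^ 2)%N by rewrite -expnD addn2.
  set q := (p ^ F)%N; set k := K; set r := (p ^ 2)%N; nia.
Qed.


Lemma scale_cnt (p E J : nat) (A B C : int) (P : nat -> nat -> bool) : prime p -> (2 * J <= E)%N ->
  (forall x y, (x < p ^ E)%N -> (y < p ^ E)%N -> P x y ->
      [&& (p ^ J %| x)%N, (p ^ J %| y)%N & dz (p ^ E) (Qf A B C x%:Z y%:Z)]) ->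
  (cnt2 (p ^ E) P <= (p ^ J) ^ 2 * cnt2 (p ^ (E - 2 * J)) (fun x y => dz (p ^ (E - 2 * J)) (Qf A B C x%:Z y%:Z)))%N.
Proof.
move=> pp JE HP.
have p0 : (0 < p)%N by apply: prime_gt0.
have pJ0 : (0 < p ^ J)%N by rewrite expn_gt0 p0.
have eF1 : (p ^ (E - J) = p ^ (E - 2 * J) * p ^ J)%N.
  by rewrite -expnD; congr expn; lia.
have eF : (p ^ E = p ^ (E - J) * p ^ J)%N.
  by rewrite -expnD; congr expn; lia.
have eF2 : (p ^ E = (p ^ J) ^ 2 * p ^ (E - 2 * J))%N.
  by rewrite -expnM -expnD; congr expn; lia.
apply: (@leq_trans (cnt2 (p ^ (E - J)) (fun x y => dz (p ^ (E - 2 * J)) (Qf A B C x%:Z y%:Z)))).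
  apply: (cnt2_inj (h := fun z => (z.1 %/ p ^ J, z.2 %/ p ^ J))%N).
  - move=> x y xn yn hP /=.
    have /and3P[px py hq] := HP x y xn yn hP.
    rewrite !ltn_divLR // -eF xn yn; split => //.
    move: hq; rewrite -{1}(divnK px) -{1}(divnK py) !PoszM.
    have -> : Qf A B C ((x %/ p ^ J)%N%:Z * (p ^ J)%N%:Z) ((y %/ p ^ J)%N%:Z * (p ^ J)%N%:Z) =
              ((p ^ J) ^ 2)%N%:Z * Qf A B C (x %/ p ^ J)%N%:Z (y %/ p ^ J)%N%:Z.
      by rewrite [((p ^ J) ^ 2)%N%:Z]PoszX /Qf; ring.
    rewrite !dzE abszM absz_nat eF2 dvdn_pmul2l //.
    by rewrite expn_gt0 pJ0.
  - move=> [x y] [x' y'] /= xn yn xn' yn' hP hP' [e1 e2].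
    have /and3P[px py _] := HP x y xn yn hP.
    have /and3P[px' py' _] := HP x' y' xn' yn' hP'.
    by rewrite -(divnK px) -(divnK px') e1 -(divnK py) -(divnK py') e2.
rewrite eF1 cnt2_per //.
by move=> x y; rewrite Qf_per.
Qed.

Lemma res_y (A1 B1 C1 A2 B2 C2 x y : int) :
  resQ A1 B1 C1 A2 B2 C2 * y ^+ 3 =
  (A2 * (A1 * B2 - A2 * B1) * x + ((A1 * B2 - A2 * B1) * B2 - (A1 * C2 - A2 * C1) * A2) * y) * Qf A1 B1 C1 x y
  + (- A1 * (A1 * B2 - A2 * B1) * x + (A1 * (A1 * C2 - A2 * C1) - B1 * (A1 * B2 - A2 * B1)) * y) * Qf A2 B2 C2 x y.
Proof. rewrite /resQ /Qf; ring. Qed.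

Lemma res_x (A1 B1 C1 A2 B2 C2 x y : int) :
  resQ A1 B1 C1 A2 B2 C2 * x ^+ 3 =
  (C2 * (- (B1 * C2 - B2 * C1)) * y + ((- (B1 * C2 - B2 * C1)) * B2 - (- (A1 * C2 - A2 * C1)) * C2) * x) * Qf A1 B1 C1 x y
  + (- C1 * (- (B1 * C2 - B2 * C1)) * y + (C1 * (- (A1 * C2 - A2 * C1)) - B1 * (- (B1 * C2 - B2 * C1))) * x) * Qf A2 B2 C2 x y.
Proof. rewrite /resQ /Qf; ring. Qed.

Lemma pow_coprime_nz (p k : nat) (R X : int) : prime p -> R != 0 ->
  ~~ (p %| `|X|)%N -> dz (p ^ k) (R * X) -> (logn p `|R| < k)%N -> False.
Proof.
move=> pp R0 nX h lt.
have R0' : (0 < `|R|)%N by rewrite absz_gt0.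
move: h; rewrite dzE abszM Gauss_dvdl; last first.
  by apply: coprimeXl; rewrite prime_coprime.
by rewrite pfactor_dvdn // leqNgt lt.
Qed.

Lemma common_div (p : nat) (A1 B1 C1 A2 B2 C2 : int) : prime p ->
  resQ A1 B1 C1 A2 B2 C2 != 0 ->
  forall n x y E', (2 * n <= E' - logn p `|resQ A1 B1 C1 A2 B2 C2|)%N ->
  dz (p ^ E') (Qf A1 B1 C1 x%:Z y%:Z) -> dz (p ^ E') (Qf A2 B2 C2 x%:Z y%:Z) ->
  (p ^ n %| x)%N && (p ^ n %| y)%N.
Proof.
move=> pp R0; set R := resQ _ _ _ _ _ _; set r := logn p `|R|.
have p0 : (0 < p)%N by apply: prime_gt0.
elim=> [|n IH] x y E' hn h1 h2; first by rewrite !expn0 !dvd1n.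
have rlt : (r < E')%N by lia.
have hdiv : forall z : int, R * z ^+ 3 = R * z ^+ 3 -> True by [].
have hx : (p %| x)%N.
  apply/idPn => nx.
  apply: (@pow_coprime_nz p E' R (x%:Z ^+ 3)) => //.
    by rewrite -PoszX absz_nat Euclid_dvdX // negb_and nx.
  rewrite /R (res_x _ _ _ _ _ _ _ y%:Z); apply: dzD; apply: dzMl => //.
have hy : (p %| y)%N.
  apply/idPn => ny.
  apply: (@pow_coprime_nz p E' R (y%:Z ^+ 3)) => //.
    by rewrite -PoszX absz_nat Euclid_dvdX // negb_and ny.
  rewrite /R (res_y _ _ _ _ _ _ x%:Z); apply: dzD; apply: dzMl => //.
have e2 : (p ^ E' = p ^ 2 * p ^ (E' - 2))%N by rewrite -expnD; congr expn; lia.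
have sc : forall A B C : int, dz (p ^ E') (Qf A B C x%:Z y%:Z) ->
    dz (p ^ (E' - 2)) (Qf A B C (x %/ p)%N%:Z (y %/ p)%N%:Z).
  move=> A B C; rewrite -{1}(divnK hx) -{1}(divnK hy) !PoszM.
  have -> : Qf A B C ((x %/ p)%N%:Z * p%:Z) ((y %/ p)%N%:Z * p%:Z) =
              (p ^ 2)%N%:Z * Qf A B C (x %/ p)%N%:Z (y %/ p)%N%:Z.
    by rewrite [(p ^ 2)%N%:Z]PoszX /Qf; ring.
  by rewrite !dzE abszM absz_nat e2 dvdn_pmul2l // expn_gt0 p0.
have /andP[h3 h4] := IH (x %/ p)%N (y %/ p)%N (E' - 2)%N (ltac:(lia)) (sc _ _ _ h1) (sc _ _ _ h2).
by rewrite -(divnK hx) -(divnK hy) expnSr !dvdn_pmul2r // h3 h4.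
Qed.

Lemma Qf_perd (A B C : int) (M N : nat) x y : (M %| N)%N ->
  dz M (Qf A B C x%:Z y%:Z) = dz M (Qf A B C (x %% N)%N%:Z (y %% N)%N%:Z).
Proof.
move=> MN; apply: dz_diff.
rewrite {1}(divn_eq x N) {1}(divn_eq y N) !PoszD !PoszM.
set X := (x %% N)%N%:Z; set Y := (y %% N)%N%:Z; set k := (x %/ N)%N%:Z; set l := (y %/ N)%N%:Z.
have -> : Qf A B C (k * N%:Z + X) (l * N%:Z + Y) - Qf A B C X Y =
   N%:Z * (A * (k * k * N%:Z + 2 * k * X) + B * (k * l * N%:Z + k * Y + l * X)
           + C * (l * l * N%:Z + 2 * l * Y)) by rewrite /Qf; ring.
by apply: dzMr; rewrite dz_nat.
Qed.

Lemma logn_le (p n : nat) : prime p -> (0 < n)%N -> (logn p n <= n)%N.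
Proof.
move=> pp n0; apply: ltnW; apply: (leq_trans (ltn_expl _ (prime_gt1 pp))).
by apply: dvdn_leq => //; apply: pfactor_dvdnn.
Qed.

Lemma pair_bound (p : nat) (A1 B1 C1 A2 B2 C2 : int) (E E' T' : nat) :
  prime p -> A1 != 0 -> C1 != 0 -> B1 ^+ 2 - 4 * A1 * C1 != 0 ->
  resQ A1 B1 C1 A2 B2 C2 != 0 -> (E' <= E)%N ->
  (cnt2 (p ^ (E + T')) (fun x y => dz (p ^ E) (Qf A1 B1 C1 x%:Z y%:Z) && dz (p ^ E') (Qf A2 B2 C2 x%:Z y%:Z))
   <= (2 * KR A1 B1 C1 + 1) * (absz (resQ A1 B1 C1 A2 B2 C2) + 2) * (E - E' + 1) * p ^ (2 * T' + E))%N.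
Proof.
move=> pp A0 C0 D0 R0 EE.
have p0 : (0 < p)%N by apply: prime_gt0.
set R := resQ A1 B1 C1 A2 B2 C2.
set r := logn p `|R|.
have rR : (r <= `|R|)%N by apply: logn_le => //; rewrite absz_gt0.
set J := ((E' - r)./2)%N.
have hJ1 : (2 * J <= E' - r)%N by rewrite /J mul2n -{2}(odd_double_half (E' - r)) leq_addl.
have hJ2 : (E' - r <= 2 * J + 1)%N.
  by rewrite /J mul2n -{1}(odd_double_half (E' - r)) addnC leq_add2l leq_b1.
rewrite expnD cnt2_per; last first.
  move=> x y /=; rewrite -(@Qf_perd A1 B1 C1 (p ^ E)%N (p ^ E)%N x y (dvdnn _)).
  by rewrite -(@Qf_perd A2 B2 C2 (p ^ E')%N (p ^ E)%N x y) // dvdn_exp2l.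
apply: (@leq_trans ((p ^ T') ^ 2 * ((p ^ J) ^ 2 * cnt2 (p ^ (E - 2 * J)) (fun x y => dz (p ^ (E - 2 * J)) (Qf A1 B1 C1 x%:Z y%:Z))))).
  rewrite leq_mul2l; apply/orP; right.
  apply: scale_cnt => //; first by lia.
  move=> x y _ _ /andP[h1 h2].
  have := common_div pp R0 (n := J) (x := x) (y := y) (E' := E') hJ1 (dz_pow EE h1) h2.
  by case/andP => -> ->; rewrite h1.
apply: (@leq_trans ((p ^ T') ^ 2 * ((p ^ J) ^ 2 * ((2 * KR A1 B1 C1 + 1) * (E - 2 * J).+1 * p ^ (E - 2 * J))))).
  by rewrite !leq_mul2l; apply/orP; right; apply/orP; right; apply: N_bound.
have ep : ((p ^ T') ^ 2 * (p ^ J) ^ 2 * p ^ (E - 2 * J) = p ^ (2 * T' + E))%N.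
  by rewrite -!expnM -!expnD; congr expn; lia.
have -> : ((p ^ T') ^ 2 * ((p ^ J) ^ 2 * ((2 * KR A1 B1 C1 + 1) * (E - 2 * J).+1 * p ^ (E - 2 * J)))
   = (2 * KR A1 B1 C1 + 1) * (E - 2 * J).+1 * ((p ^ T') ^ 2 * (p ^ J) ^ 2 * p ^ (E - 2 * J)))%N.
  by ring.
rewrite ep -!mulnA leq_mul2l; apply/orP; right.
rewrite mulnA leq_mul2r; apply/orP; right.
move: rR hJ1 hJ2 EE; rewrite -/R; set aR := `|R|%N => rR hJ1 hJ2 EE.
apply: (@leq_trans (E - E' + 1 + (r + 1) * (E - E' + 1))); first nia.
rewrite -mulSn leq_mul2r; apply/orP; right; lia.
Qed.

Lemma card_cnt2 (M : nat) (P : nat -> nat -> bool) :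
  #|[set x : 'I_M * 'I_M | P x.1 x.2]| = cnt2 M P.
Proof.
rewrite -sum1_card big_mkcond /=.
rewrite (eq_bigr (fun z : 'I_M * 'I_M => (P z.1 z.2 : nat))); last by move=> z _; rewrite inE; case: (P _ _).
rewrite -(pair_bigA _ (fun i j : 'I_M => (P i j : nat))) /=.
have e : forall F : nat -> nat, \sum_(i <- iota 0 M) F i = \sum_(i < M) F i.
  by move=> F; rewrite -(big_mkord xpredT F) /index_iota subn0.
rewrite cnt2E e; apply: eq_bigr => i _.
by rewrite /cnt count_sum e.
Qed.

Lemma fac (X Y : int) : X * Y != 0 -> X != 0 /\ (absz X <= absz (X * Y)%R)%N.
Proof.
rewrite mulf_eq0 negb_or => /andP[X0 Y0]; split => //.
by rewrite abszM leq_pmulr // absz_gt0.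
Qed.

Lemma D_form g (a b c : 'I_g -> int) (k : 'I_g) :
  exists Y, Dconst a b c = (a k * c k * disc (a k) (b k) (c k)) * Y.
Proof.
rewrite /Dconst (bigD1 k) //=.
eexists; rewrite mulrCA -!mulrA; reflexivity.
Qed.

Lemma D_facts g (a b c : 'I_g -> int) : Dconst a b c != 0 -> forall k,
  [/\ a k != 0, c k != 0, disc (a k) (b k) (c k) != 0 &
      [/\ (absz (a k) <= absz (Dconst a b c))%N, (absz (c k) <= absz (Dconst a b c))%N &
      (absz (disc (a k) (b k) (c k)) <= absz (Dconst a b c))%N]].
Proof.
move=> D0 k; have [Y eY] := D_form a b c k.
rewrite eY in D0 *.
have [h1 h2] := fac D0.
have e1 : a k * c k * disc (a k) (b k) (c k) * Y = a k * (c k * disc (a k) (b k) (c k) * Y) by ring.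
have e2 : a k * c k * disc (a k) (b k) (c k) * Y = c k * (a k * disc (a k) (b k) (c k) * Y) by ring.
have e3 : a k * c k * disc (a k) (b k) (c k) * Y = disc (a k) (b k) (c k) * (a k * c k * Y) by ring.
have [a1 a2] := fac (X := a k) (Y := c k * disc (a k) (b k) (c k) * Y) (ltac:(by rewrite -e1)).
have [c1 c2] := fac (X := c k) (Y := a k * disc (a k) (b k) (c k) * Y) (ltac:(by rewrite -e2)).
have [d1 d2] := fac (X := disc (a k) (b k) (c k)) (Y := a k * c k * Y) (ltac:(by rewrite -e3)).
by split => //; split; [rewrite e1 | rewrite e2 | rewrite e3].
Qed.

Lemma resQ_sym A1 B1 C1 A2 B2 C2 : resQ A1 B1 C1 A2 B2 C2 = resQ A2 B2 C2 A1 B1 C1.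
Proof. rewrite /resQ; ring. Qed.

Lemma D_res g (a b c : 'I_g -> int) : Dconst a b c != 0 -> forall i j : 'I_g, i != j ->
  res_forms a b c i j != 0 /\ (absz (res_forms a b c i j) <= absz (Dconst a b c))%N.
Proof.
move=> D0.
suff H : forall i j : 'I_g, (i < j)%N -> exists Y, Dconst a b c = res_forms a b c i j * Y.
  move=> i j ij.
  have [lt|lt] : (i < j)%N \/ (j < i)%N.
    by move: ij; rewrite neq_ltn => /orP[]; [left|right].
    have [Y eY] := H i j lt; rewrite eY in D0 *; exact: fac.
  have [Y eY] := H j i lt; rewrite /res_forms resQ_sym -/(res_forms a b c j i).
  rewrite eY in D0 *; exact: fac.
move=> i j ij.
have e1 : \prod_(j0 < g | (i < j0)%N) res_forms a b c i j0 =
    res_forms a b c i j * \prod_(j0 < g | (i < j0)%N && (j0 != j)) res_forms a b c i j0.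
  by rewrite (bigD1 j).
have e0 : \prod_(i0 < g) \prod_(j0 < g | (i0 < j0)%N) res_forms a b c i0 j0 =
    (\prod_(j0 < g | (i < j0)%N) res_forms a b c i j0) *
    \prod_(i0 < g | i0 != i) \prod_(j0 < g | (i0 < j0)%N) res_forms a b c i0 j0.
  by rewrite (bigD1 i).
rewrite /Dconst e0 e1.
eexists; rewrite mulrCA -!mulrA; reflexivity.
Qed.

Lemma dz_prime_mul (p : nat) (X Y : int) : prime p -> dz p (X * Y) -> dz p X || dz p Y.
Proof. by move=> pp; rewrite !dzE abszM Euclid_dvdM. Qed.

Lemma distinct_ndz (p t t' : nat) : (t < p)%N -> (t' < p)%N -> t != t' -> ~~ dz p (t%:Z - t'%:Z).
Proof.
move=> tp tp' ne; apply/negP => /natz_dvd_mod.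
by rewrite !modn_small // => e; move: ne; rewrite e eqxx.
Qed.

Lemma roots2 (p : nat) (A B C : int) : prime p -> ~~ (p %| absz A)%N ->
  (cnt p (fun t => dz p (A * t%:Z ^+ 2 + B * t%:Z + C)) <= 2)%N.
Proof.
move=> pp nA.
set P := fun t : nat => dz p (A * t%:Z ^+ 2 + B * t%:Z + C).
have key : forall t t', (t < p)%N -> (t' < p)%N -> t != t' -> P t -> P t' ->
    dz p (A * (t%:Z + t'%:Z) + B).
  move=> t t' tp tp' ne h1 h2.
  have h : dz p ((t%:Z - t'%:Z) * (A * (t%:Z + t'%:Z) + B)).
    have -> : (t%:Z - t'%:Z) * (A * (t%:Z + t'%:Z) + B) =
        (A * t%:Z ^+ 2 + B * t%:Z + C) - (A * t'%:Z ^+ 2 + B * t'%:Z + C) by ring.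
    by apply: dzB.
  by move: (dz_prime_mul pp h); rewrite (negbTE (distinct_ndz tp tp' ne)).
rewrite leqNgt; apply/negP.
have ms : forall t, t \in filter P (iota 0 p) -> (t < p)%N && P t.
  by move=> t; rewrite mem_filter mem_iota add0n andbC.
have us : uniq (filter P (iota 0 p)) by rewrite filter_uniq ?iota_uniq.
rewrite /cnt -size_filter.
move: ms us; case: (filter P (iota 0 p)) => [|t1 [|t2 [|t3 r]]] //= ms.
rewrite !inE !negb_or => /and4P[/and3P[n12 n13 _] /andP[n23 _] _ _] _.
have /andP[p1 P1] := ms t1 (mem_head _ _).
have /andP[p2 P2] := ms t2 (ltac:(by rewrite !inE eqxx orbT)).
have /andP[p3 P3] := ms t3 (ltac:(by rewrite !inE eqxx !orbT)).
have k12 := key _ _ p1 p2 n12 P1 P2.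
have k13 := key _ _ p1 p3 n13 P1 P3.
have h : dz p (A * (t2%:Z - t3%:Z)).
  have -> : A * (t2%:Z - t3%:Z) = (A * (t1%:Z + t2%:Z) + B) - (A * (t1%:Z + t3%:Z) + B) by ring.
  by apply: dzB.
move: (dz_prime_mul pp h); rewrite (negbTE (distinct_ndz p2 p3 n23)) orbF dzE.
by rewrite (negbTE nA).
Qed.

Lemma rho_cnt2 g (a b c : 'I_g -> int) (d : 'I_g -> nat) :
  rho a b c d = cnt2 (\prod_(i < g) d i) (fun x y => [forall i, dz (d i) (qform a b c i x%:Z y%:Z)]).
Proof. exact: card_cnt2. Qed.

Lemma rho_star_cnt2 g (a b c : 'I_g -> int) (d : 'I_g -> nat) :
  rho_star a b c d = cnt2 (\prod_(i < g) d i) (fun x y => [forall i, dz (d i) (qform a b c i x%:Z y%:Z)]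
        && (gcdn (gcdn x y) (\prod_(i < g) d i) == 1)%N).
Proof. exact: card_cnt2. Qed.

Lemma part1 (g : nat) (a b c : 'I_g -> int) :
  (2 <= g)%N -> Dconst a b c != 0 ->
  (exists C : nat, forall (p : nat) (e : 'I_g -> nat) (s : {perm 'I_g}),
     prime p ->
     (forall i j : 'I_g, (i <= j)%N -> (e (s i) <= e (s j))%N) ->
     forall lst pen : 'I_g, val lst = g.-1 -> val pen = g.-2 ->
     (rho a b c (fun i => p ^ e i)
        <= C * (e (s lst) - e (s pen) + 1)
             * p ^ ((\sum_(i < g | i != lst) 2 * e (s i)) + e (s lst)))%N).
Proof.
move=> hg hD.
set Dn := absz (Dconst a b c).
exists ((2 * (8 * Dn * Dn * Dn) + 1) * (Dn + 2))%N.
move=> p e s pp hs lst pen hl hp.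
set i1 := s lst; set i2 := s pen.
have lp : lst != pen.
  apply/eqP => eq; move: hl hp; rewrite eq => -> ; lia.
have i12 : i1 != i2 by rewrite /i1 /i2 (inj_eq perm_inj).
have EE : (e i2 <= e i1)%N by apply: hs; rewrite hl hp; lia.
set T' := (\sum_(i < g | i != lst) e (s i))%N.
have eT : (\sum_(i < g) e i = e i1 + T')%N.
  by rewrite (reindex_inj (@perm_inj _ s)) /= (bigD1 lst).
have eM : (\prod_(i < g) p ^ e i = p ^ (e i1 + T'))%N by rewrite -eT expn_sum.
rewrite rho_cnt2 eM.
have [a1 c1 d1 [ba1 bc1 bd1]] := D_facts hD i1.
have [r1 br1] := D_res hD i12.
apply: (@leq_trans (cnt2 (p ^ (e i1 + T')) (fun x y => dz (p ^ e i1) (Qf (a i1) (2 * b i1) (c i1) x%:Z y%:Z)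
                      && dz (p ^ e i2) (Qf (a i2) (2 * b i2) (c i2) x%:Z y%:Z)))).
  apply: cnt2_sub => x y _ _ /forallP H.
  by rewrite (H i1) (H i2).
apply: (leq_trans (pair_bound T' pp a1 c1 d1 r1 EE)).
have eexp : ((\sum_(i < g | i != lst) 2 * e (s i)) + e (s lst) = 2 * T' + e i1)%N.
  by rewrite -big_distrr.
rewrite eexp -/i1.
apply: leq_mul => //; apply: leq_mul => //; apply: leq_mul.
  rewrite leq_add2r leq_mul2l /=; rewrite /KR.
  by rewrite leq_mul // leq_mul // leq_mul.
by rewrite leq_add2r.
Qed.

Lemma cnt2_split n (P G : nat -> nat -> bool) :
  cnt2 n P = (cnt2 n (fun x y => P x y && G x y) + cnt2 n (fun x y => P x y && ~~ G x y))%N.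
Proof.
rewrite /cnt2; elim: (pairs n) => [|z r IH] //=.
by rewrite IH; case: (P z.1 z.2); case: (G z.1 z.2); rewrite /= ?add0n ?addn0 ?addnA ?addn1 ?addSn.
Qed.

Lemma cnt2_eq n (P Q : nat -> nat -> bool) :
  (forall x y, (x < n)%N -> (y < n)%N -> P x y = Q x y) -> cnt2 n P = cnt2 n Q.
Proof.
move=> H; apply/eqP; rewrite eqn_leq; apply/andP; split; apply: cnt2_sub => x y xn yn.
  by rewrite H.
by rewrite H.
Qed.

Lemma nodiv (p x : nat) : (0 < x)%N -> (x < p)%N -> ~~ (p %| x)%N.
Proof. by move=> x0 xp; apply/negP => /(dvdn_leq x0); rewrite leqNgt xp. Qed.

Lemma cnt_dvd_p (p : nat) : prime p -> cnt p (fun y => p %| y)%N = 1%N.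
Proof.
move=> pp; have := prime_gt0 pp; case: p pp => // q pp _.
rewrite /cnt /= add1n; congr S.
rewrite (eq_in_count (a2 := pred0)) ?count_pred0 // => y.
rewrite mem_iota => /andP[y1 yq] /=; apply/negbTE; apply: nodiv => //.
Qed.

Lemma cnt2_dvd_p (p : nat) : prime p -> cnt2 p (fun x y => (p %| x)%N && (p %| y)%N) = 1%N.
Proof.
move=> pp; rewrite cnt2E.
rewrite (eq_bigr (fun x => ((p %| x)%N : nat) * cnt p (fun y => p %| y)%N)%N); last first.
  by move=> x _; case: (p %| x)%N; rewrite /= ?mul1n ?mul0n // /cnt (eq_count (a2 := pred0)) ?count_pred0.
by rewrite -big_distrl /= -count_sum -/(cnt p _) cnt_dvd_p // muln1.
Qed.

Lemma part2 (g : nat) (a b c : 'I_g -> int) : (1 <= g)%N ->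
  forall p : nat, prime p ->
        rho a b c (fun _ => p) = (rho_star a b c (fun _ => p) + p ^ (2 * (g - 1)))%N.
Proof.
move=> hg p pp.
have p0 : (0 < p)%N by apply: prime_gt0.
rewrite rho_cnt2 rho_star_cnt2.
have eM : (\prod_(i < g) p = p ^ g)%N by rewrite prod_nat_const card_ord.
rewrite eM (@cnt2_split _ _ (fun x y => gcdn (gcdn x y) (p ^ g) == 1)%N); congr addn.
have -> : (p ^ g = p * p ^ (g - 1))%N by rewrite -expnS; congr expn; lia.
rewrite (cnt2_eq (Q := fun x y => (p %| x)%N && (p %| y)%N)); last first.
  move=> x y _ _.
  have -> : ~~ (gcdn (gcdn x y) (p * p ^ (g - 1)) == 1)%N = (p %| x)%N && (p %| y)%N.
    have -> : (p * p ^ (g - 1) = p ^ g)%N by rewrite -expnS; congr expn; lia.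
    rewrite -/(coprime _ _) coprime_pexpr // coprime_sym prime_coprime // negbK.
    by rewrite dvdn_gcd.
  case: (boolP ((p %| x)%N && (p %| y)%N)) => [/andP[px py]|]; rewrite ?andbF ?andbT //.
  apply/forallP => i; rewrite /qform.
  have -> : a i * x%:Z ^+ 2 + 2 * b i * x%:Z * y%:Z + c i * y%:Z ^+ 2 =
     x%:Z * (a i * x%:Z + 2 * b i * y%:Z) + y%:Z * (c i * y%:Z) by ring.
  by apply: dzD; apply: dzMr; rewrite dz_nat.
rewrite cnt2_per; last by move=> x y; rewrite /dvdn !modn_mod.
by rewrite cnt2_dvd_p // muln1 -expnM mulnC.
Qed.

Lemma part4 (g : nat) (a b c : 'I_g -> int) : Dconst a b c != 0 ->
  (exists N : nat, forall p : nat, prime p -> (N < p)%N ->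
        forall n : 'I_g, (rho a b c (fun i => p ^ (i == n)) <= 2 * p)%N).
Proof.
move=> hD; exists (absz (Dconst a b c)) => p pp Np n.
have p0 : (0 < p)%N by apply: prime_gt0.
have [a0 _ _ [ba _ _]] := D_facts hD n.
have nA : ~~ (p %| absz (a n))%N.
  by apply: nodiv; [rewrite absz_gt0 | apply: leq_ltn_trans Np].
rewrite rho_cnt2.
have eM : (\prod_(i < g) p ^ (i == n) = p)%N.
  by rewrite (bigD1 n) //= eqxx expn1 big1 ?muln1 // => i /negbTE ->.
rewrite eM.
apply: (@leq_trans (cnt2 p (fun x y => dz p (Qf (a n) (2 * b n) (c n) x%:Z y%:Z)))).
  apply: cnt2_sub => x y _ _ /forallP /(_ n); by rewrite eqxx expn1.
rewrite cnt2_swap cnt2E -[X in (_ <= _ * X)%N](size_iota 0 p) -sum1_size big_distrr /=.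
rewrite big_seq [X in (_ <= X)%N]big_seq; apply: leq_sum => y; rewrite mem_iota add0n => /= yp.
rewrite muln1.
case: (posnP y) => [->|y0].
  apply: (@leq_trans 1); last by [].
  apply: cnt_le1 => x x' xp xp' h1 h2.
  have z : forall z, (z < p)%N -> dz p (Qf (a n) (2 * b n) (c n) z%:Z 0) -> z = 0%N.
    move=> z zp.
    have -> : Qf (a n) (2 * b n) (c n) z%:Z 0 = a n * (z%:Z * z%:Z) by rewrite /Qf; ring.
    move=> /(dz_prime_mul pp) /orP[].
      by rewrite dzE (negbTE nA).
    move/(dz_prime_mul pp); rewrite orbb dz_nat => hz; exact: small_zero zp hz.
  by rewrite (z _ xp h1) (z _ xp' h2).
have py := nodiv y0 yp.
have := @fiber_y p 1 y (a n) (2 * b n) (c n) pp py; rewrite expn1 => h.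
apply: (leq_trans h); exact: roots2.
Qed.

Lemma part3 (g : nat) (a b c : 'I_g -> int) : (2 <= g)%N -> Dconst a b c != 0 ->
  (exists C : nat, forall p : nat, prime p ->
        `| (rho a b c (fun _ => p))%:Z - (p ^ (2 * (g - 1)))%:Z | <= (C * p)%:Z).
Proof.
move=> hg hD.
set Dn := absz (Dconst a b c).
have Dn0 : (0 < Dn)%N by rewrite absz_gt0.
exists (Dn ^ (2 * g))%N => p pp.
have p0 : (0 < p)%N by apply: prime_gt0.
rewrite part2 ?(leq_trans _ hg) // PoszD addrK ger0_norm // lez_nat.
have g0 : (0 < g)%N by apply: leq_trans hg.
pose i0 : 'I_g := Ordinal g0.
pose i1 : 'I_g := Ordinal hg.
have i01 : i0 != i1 by [].
have [R0 bR] := D_res hD i01.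
set R := res_forms a b c i0 i1 in R0 bR.
rewrite rho_star_cnt2.
have eM : (\prod_(i < g) p = p ^ g)%N by rewrite prod_nat_const card_ord.
rewrite eM.
case: (boolP (p %| absz R)%N) => hR.
  have pD : (p <= Dn)%N.
    by apply: (leq_trans _ bR); apply: dvdn_leq => //; rewrite absz_gt0.
  apply: (leq_trans (cnt2_le _ _)).
  rewrite -expnD addnn -mul2n.
  set k := (2 * g).-1.
  have ek : (2 * g = k.+1)%N by rewrite prednK // muln_gt0.
  have k0 : (0 < k)%N by rewrite /k; lia.
  have hk : (p ^ k <= Dn ^ k)%N by rewrite leq_exp2r.
  rewrite ek !expnS; move: hk Dn0; set u := (p ^ k)%N; set v := (Dn ^ k)%N => hk Dn0.
  rewrite mulnC leq_mul2r; apply/orP; right; apply: (leq_trans hk); exact: leq_pmull.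
apply: (@leq_trans (cnt2 (p ^ g) (fun _ _ => false))); last by rewrite /cnt2 count_pred0.
apply: cnt2_sub => x y _ _ /andP[/forallP H hc].
have Q0 := H i0; have Q1 := H i1.
have hx : (p %| x)%N.
  have h : dz p (R * x%:Z ^+ 3).
    rewrite /R /res_forms (res_x _ _ _ _ _ _ _ y%:Z).
    by apply: dzD; apply: dzMl.
  move: (dz_prime_mul pp h); rewrite dzE (negbTE hR) /= -PoszX dz_nat Euclid_dvdX //.
  by case/andP.
have hy : (p %| y)%N.
  have h : dz p (R * y%:Z ^+ 3).
    rewrite /R /res_forms (res_y _ _ _ _ _ _ x%:Z).
    by apply: dzD; apply: dzMl.
  move: (dz_prime_mul pp h); rewrite dzE (negbTE hR) /= -PoszX dz_nat Euclid_dvdX //.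
  by case/andP.
move: hc; rewrite -/(coprime _ _) coprime_pexpr // coprime_sym prime_coprime //.
by rewrite dvdn_gcd hx hy.
Qed.

Unset Implicit Arguments.
Theorem lemma2p4 (g : nat) (a b c : 'I_g -> int) :
  (2 <= g)%N ->
  (forall i, irreducible_form (a i) (2 * b i) (c i)) ->
  (forall i, (a i = 1 %[mod 4])%Z) ->
  Dconst a b c != 0 ->
  (* first bound *)
  (exists C : nat, forall (p : nat) (e : 'I_g -> nat) (s : {perm 'I_g}),
     prime p ->
     (forall i j : 'I_g, (i <= j)%N -> (e (s i) <= e (s j))%N) ->
     forall lst pen : 'I_g, val lst = g.-1 -> val pen = g.-2 ->
     (rho a b c (fun i => p ^ e i)
        <= C * (e (s lst) - e (s pen) + 1)
             * p ^ ((\sum_(i < g | i != lst) 2 * e (s i)) + e (s lst)))%N)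
  /\ (forall p : nat, prime p ->
        rho a b c (fun _ => p) = (rho_star a b c (fun _ => p) + p ^ (2 * (g - 1)))%N)
  /\ (exists C : nat, forall p : nat, prime p ->
        `| (rho a b c (fun _ => p))%:Z - (p ^ (2 * (g - 1)))%:Z | <= (C * p)%:Z)
  /\ (exists N : nat, forall p : nat, prime p -> (N < p)%N ->
        forall n : 'I_g, (rho a b c (fun i => p ^ (i == n)) <= 2 * p)%N).
Proof.
move=> hg _ _ hD.
split; first exact: part1.
split. move=> p pp. exact: (@part2 g a b c (ltnW hg) p pp).
split; first exact: part3.
exact: part4.
Qed.
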